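(* Let $V=\bigoplus_{i\in\mathbb N}\mathbb R$ (finitely supported sequences, coordinatewise addition) and $F=\mathbb R$, where $\alpha\in\mathbb R$ acts by $\alpha\cdot(v_i)_i=(\alpha^{2i+1}v_i)_i$. Then $(V,F)$ is a near vector space, but for any non-principal ultrafilter $\mathcal U$ on $\mathbb N$ the ultrapower $\mathcal W=V^{\mathbb N}/\mathcal U$ (as an $\mathcal L_{Fnvs}$-structure) is not a near vector space over $F$: its quasi-kernel does not generate it. Moreover $Q(\mathcal W)\subsetneq \prod Q(V)/\mathcal U$. Consequently the class of near vector spaces over $F$ is not elementary (not axiomatisable by first-order sentences in $\mathcal L_{Fnvs}$).
   Context: An F-group is a pair $(V,F)$ where $(V,+)$ is a group and $F$ is a set of endomorphisms of $V$ such that: the maps $0,1,-1$ lie in $F$; $F\setminus\{0\}$ is a subgroup of $\mathrm{Aut}(V,+)$ under composition; and if $\alpha x=\beta x$ with $\alpha,\beta\in F$, $x\in V$ then $\alpha=\beta$ or $x=0$. The quasi-kernel $Q(V)$ is the set of $u\in V$ such that for all $\alpha,\beta\in F$ there is $\gamma\in F$ with $\alpha u+\beta u=\gamma u$. $(V,F)$ is a near vector space if $Q(V)$ generates $(V,+)$. The language $\mathcal L_{Fnvs}=\{+,0,(\lambda)_{\lambda\in F}\}$ has a unary function symbol for each $\lambda\in F$, interpreted as the action of $\lambda$; ultrapowers are taken in this language, so $F$ acts on $\mathcal W$ coordinatewise. *)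

(* Defs.v *)
From Stdlib Require Import Reals Lia Classical ClassicalEpsilon FunctionalExtensionality.
Open Scope R_scope.

Record LStruct := {
  car :> Type;
  ladd : car -> car -> car;
  lzero : car;
  lact : R -> car -> car
}.

Arguments ladd {_}.
Arguments lzero {_}.
Arguments lact {_}.

Definition is_group (M : LStruct) : Prop :=
  (forall x y z : M, ladd x (ladd y z) = ladd (ladd x y) z) /\
  (forall x : M, ladd lzero x = x /\ ladd x lzero = x) /\
  (forall x : M, exists y : M, ladd x y = lzero /\ ladd y x = lzero).

(* F = { lact l | l in R }, a set of maps V -> V.
   A map f lies in F iff f = lact l (pointwise) for some l. *)
Definition F_group (M : LStruct) : Prop :=
  is_group M /\
  (forall (l : R) (x y : M), lact l (ladd x y) = ladd (lact l x) (lact l y)) /\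
  (exists l, forall x : M, lact l x = lzero) /\
  (exists l, forall x : M, lact l x = x) /\
  (exists l, forall x : M, ladd x (lact l x) = lzero /\ ladd (lact l x) x = lzero) /\
  (* F \ {0} is a subgroup of Aut(V,+) under composition *)
  (forall l : R, (exists x : M, lact l x <> lzero) ->
     (forall x y : M, lact l x = lact l y -> x = y) /\
     (forall y : M, exists x, lact l x = y)) /\
  (forall l1 l2 : R, (exists x : M, lact l1 x <> lzero) -> (exists x : M, lact l2 x <> lzero) ->
     exists l3, forall x : M, lact l3 x = lact l1 (lact l2 x)) /\
  (forall l : R, (exists x : M, lact l x <> lzero) ->
     exists l', forall x : M, lact l' (lact l x) = x) /\
  (forall (a b : R) (x : M), lact a x = lact b x ->
     (forall y : M, lact a y = lact b y) \/ x = lzero).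

Definition Qker (M : LStruct) (u : M) : Prop :=
  forall a b : R, exists c : R, ladd (lact a u) (lact b u) = lact c u.

Inductive gen (M : LStruct) (S : M -> Prop) : M -> Prop :=
  | gen_in : forall u, S u -> gen M S u
  | gen_zero : gen M S lzero
  | gen_add : forall x y, gen M S x -> gen M S y -> gen M S (ladd x y)
  | gen_inv : forall x y, gen M S x -> ladd y x = lzero -> gen M S y.

Definition near_vs (M : LStruct) : Prop :=
  F_group M /\ forall v : M, gen M (Qker M) v.

Definition fin_supp (s : nat -> R) : Prop := exists N, forall i, (N <= i)%nat -> s i = 0.

Definition Vcar := { s : nat -> R | fin_supp s }.

Lemma fin_supp_add (s t : nat -> R) : fin_supp s -> fin_supp t -> fin_supp (fun i => s i + t i).
Proof.
  intros [N1 H1] [N2 H2]; exists (N1 + N2)%nat; intros i Hi.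
  rewrite H1, H2 by lia; ring.
Qed.

Lemma fin_supp_zero : fin_supp (fun _ => 0).
Proof. exists 0%nat; auto. Qed.

Lemma fin_supp_act (a : R) (s : nat -> R) : fin_supp s -> fin_supp (fun i => a ^ (2 * i + 1) * s i).
Proof. intros [N H]; exists N; intros i Hi; rewrite H by lia; ring. Qed.

Definition Vadd (x y : Vcar) : Vcar :=
  exist _ (fun i => proj1_sig x i + proj1_sig y i) (fin_supp_add _ _ (proj2_sig x) (proj2_sig y)).
Definition Vzero : Vcar := exist _ (fun _ => 0) fin_supp_zero.
Definition Vact (a : R) (x : Vcar) : Vcar :=
  exist _ (fun i => a ^ (2 * i + 1) * proj1_sig x i) (fin_supp_act a _ (proj2_sig x)).

Definition Vstr : LStruct := {| car := Vcar; ladd := Vadd; lzero := Vzero; lact := Vact |}.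

Definition ultrafilter (U : (nat -> Prop) -> Prop) : Prop :=
  U (fun _ => True) /\
  ~ U (fun _ => False) /\
  (forall A B : nat -> Prop, U A -> (forall n, A n -> B n) -> U B) /\
  (forall A B : nat -> Prop, U A -> U B -> U (fun n => A n /\ B n)) /\
  (forall A : nat -> Prop, U A \/ U (fun n => ~ A n)).

Definition nonprincipal (U : (nat -> Prop) -> Prop) : Prop :=
  forall n : nat, ~ U (fun m => m = n).

Section Ultrapower.
Variables (M : LStruct) (U : (nat -> Prop) -> Prop).

Definition ueq (f g : nat -> M) : Prop := U (fun n => f n = g n).

Record UPcar := { ucls : (nat -> M) -> Prop; uclsP : exists f, ucls = ueq f }.

Definition uclass (f : nat -> M) : UPcar := {| ucls := ueq f; uclsP := ex_intro _ f eq_refl |}.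

Definition urep (w : UPcar) : nat -> M := proj1_sig (constructive_indefinite_description _ (uclsP w)).

Definition UPadd (w1 w2 : UPcar) : UPcar := uclass (fun n => ladd (urep w1 n) (urep w2 n)).
Definition UPzero : UPcar := uclass (fun _ => lzero).
Definition UPact (a : R) (w : UPcar) : UPcar := uclass (fun n => lact a (urep w n)).

Definition ultrapower : LStruct :=
  {| car := UPcar; ladd := UPadd; lzero := UPzero; lact := UPact |}.

Definition prodQ (w : UPcar) : Prop :=
  exists f : nat -> M, w = uclass f /\ U (fun n => Qker M (f n)).

End Ultrapower.

Inductive term : Type :=
  | tvar : nat -> term
  | tzero : term
  | tadd : term -> term -> term
  | tact : R -> term -> term.

Inductive formula : Type :=
  | feq : term -> term -> formula
  | fnot : formula -> formula
  | fand : formula -> formula -> formula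
  | fall : nat -> formula -> formula.

Fixpoint teval (M : LStruct) (e : nat -> M) (t : term) : M :=
  match t with
  | tvar n => e n
  | tzero => lzero
  | tadd t1 t2 => ladd (teval M e t1) (teval M e t2)
  | tact a t1 => lact a (teval M e t1)
  end.

Fixpoint holds (M : LStruct) (e : nat -> M) (phi : formula) : Prop :=
  match phi with
  | feq t1 t2 => teval M e t1 = teval M e t2
  | fnot p => ~ holds M e p
  | fand p q => holds M e p /\ holds M e q
  | fall n p => forall x : M, holds M (fun k => if Nat.eqb k n then x else e k) p
  end.

Fixpoint tfree (t : term) (n : nat) : Prop :=
  match t with
  | tvar m => m = n
  | tzero => False
  | tadd t1 t2 => tfree t1 n \/ tfree t2 n
  | tact _ t1 => tfree t1 n
  end.

Fixpoint ffree (phi : formula) (n : nat) : Prop :=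
  match phi with
  | feq t1 t2 => tfree t1 n \/ tfree t2 n
  | fnot p => ffree p n
  | fand p q => ffree p n \/ ffree q n
  | fall m p => m <> n /\ ffree p n
  end.

Definition sentence (phi : formula) : Prop := forall n, ~ ffree phi n.

Definition models (M : LStruct) (phi : formula) : Prop := forall e : nat -> M, holds M e phi.

Definition elementary (K : LStruct -> Prop) : Prop :=
  exists T : formula -> Prop, (forall phi, T phi -> sentence phi) /\
    forall M : LStruct, K M <-> (forall phi, T phi -> models M phi).

(* Main.v *)
Require Import Defs.
From Stdlib Require Import Reals.
From Stdlib Require Import Reals Lra Lia Classical ClassicalEpsilon FunctionalExtensionality PropExtensionality ProofIrrelevance.
Open Scope R_scope.

Ltac dummy := idtac.
Definition unitv (k : nat) (r : R) : Vcar.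
Proof.
  refine (exist _ (fun i => if Nat.eqb i k then r else 0) _).
  exists (S k); intros i Hi. destruct (Nat.eqb_spec i k); auto; lia.
Defined.

Definition truncv (v : Vcar) (N : nat) : Vcar.
Proof.
  refine (exist _ (fun i => if Nat.ltb i N then proj1_sig v i else 0) _).
  exists N; intros i Hi. destruct (Nat.ltb_spec i N); auto; lia.
Defined.

Ltac vs := cbn [proj1_sig Vadd Vact Vzero Vstr ladd lact lzero car] in *; try unfold unitv, truncv in *; cbn [proj1_sig] in *.

Lemma Vext (x y : Vcar) : (forall i, proj1_sig x i = proj1_sig y i) -> x = y.
Proof.
  destruct x as [x px], y as [y py]; simpl; intro H.
  assert (x = y) by (apply functional_extensionality; auto).
  subst; f_equal; apply proof_irrelevance.
Qed.

Lemma neg1_odd (i : nat) : (-1) ^ (2 * i + 1) = -1.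
Proof.
  rewrite pow_add, pow_mult. replace ((-1)^2) with 1 by (simpl; ring).
  rewrite pow1; simpl; ring.
Qed.

Lemma opp_odd (x : R) (i : nat) : (- x) ^ (2 * i + 1) = - (x ^ (2 * i + 1)).
Proof.
  replace (-x) with ((-1) * x) by ring. rewrite Rpow_mult_distr, neg1_odd; ring.
Qed.

Lemma pow_strict (a b : R) (m : nat) : 0 <= a < b -> a ^ (S m) < b ^ (S m).
Proof.
  intros [Ha Hab]. simpl.
  assert (a ^ m <= b ^ m) by (apply pow_incr; lra).
  assert (0 < b ^ m) by (apply pow_lt; lra).
  apply Rle_lt_trans with (a * b ^ m).
  - apply Rmult_le_compat_l; lra.
  - apply Rmult_lt_compat_r; lra.
Qed.

Lemma odd_lt (a b : R) (i : nat) : a < b -> a ^ (2 * i + 1) < b ^ (2 * i + 1).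
Proof.
  intro H. replace (2 * i + 1)%nat with (S (2 * i)) by lia.
  destruct (Rle_lt_dec 0 a).
  - apply pow_strict; lra.
  - replace (S (2 * i)) with (2 * i + 1)%nat by lia.
    destruct (Rle_lt_dec b 0).
    + assert ((-b) ^ (2*i+1) < (-a) ^ (2*i+1)).
      { replace (2 * i + 1)%nat with (S (2 * i)) by lia. apply pow_strict; lra. }
      rewrite !opp_odd in H0; lra.
    + assert (0 < (-a) ^ (2*i+1)) by (apply pow_lt; lra).
      assert (0 < b ^ (2*i+1)) by (apply pow_lt; lra).
      rewrite opp_odd in H0; lra.
Qed.

Lemma odd_inj (a b : R) (i : nat) : a ^ (2 * i + 1) = b ^ (2 * i + 1) -> a = b.
Proof.
  intro H. destruct (Rtotal_order a b) as [h|[h|h]]; auto.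
  - apply (odd_lt _ _ i) in h; lra.
  - apply (odd_lt _ _ i) in h; lra.
Qed.

Definition oroot (s : R) (i : nat) : R :=
  match Rlt_le_dec 0 s with
  | left _ => Rpower s (/ INR (2 * i + 1))
  | right _ => match Rlt_le_dec s 0 with
               | left _ => - Rpower (- s) (/ INR (2 * i + 1))
               | right _ => 0 end
  end.

Lemma rpow_root (s : R) (i : nat) : 0 < s -> (Rpower s (/ INR (2 * i + 1))) ^ (2 * i + 1) = s.
Proof.
  intro H. rewrite <- Rpower_pow by (unfold Rpower; apply exp_pos).
  rewrite Rpower_mult, Rinv_l. apply Rpower_1; auto.
  apply not_0_INR; lia.
Qed.

Lemma oroot_spec (s : R) (i : nat) : (oroot s i) ^ (2 * i + 1) = s.
Proof.
  unfold oroot. destruct (Rlt_le_dec 0 s).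
  - apply rpow_root; auto.
  - destruct (Rlt_le_dec s 0).
    + rewrite opp_odd, rpow_root by lra. ring.
    + replace (2 * i + 1)%nat with (S (2 * i)) by lia. simpl. replace s with 0 by lra. ring.
Qed.

Lemma pow0_odd (i : nat) : 0 ^ (2 * i + 1) = 0.
Proof. replace (2 * i + 1)%nat with (S (2 * i)) by lia. simpl; ring. Qed.

Lemma V_Fgroup : F_group Vstr.
Proof.
  split; [split; [|split]|split; [|split; [|split; [|split; [|split; [|split; [|split]]]]]]]; simpl.
  - intros x y z; apply Vext; intro i; vs; ring.
  - intro x; split; apply Vext; intro i; vs; ring.
  - intro x. exists (Vact (-1) x); split; apply Vext; intro i; vs; rewrite neg1_odd; ring.
  - intros l x y; apply Vext; intro i; vs; ring.
  - exists 0; intro x; apply Vext; intro i; vs; rewrite pow0_odd; ring.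
  - exists 1; intro x; apply Vext; intro i; vs; rewrite pow1; ring.
  - exists (-1); intro x; split; apply Vext; intro i; vs; rewrite neg1_odd; ring.
  - intros l [x Hx].
    assert (Hl : l <> 0).
    { intro e; subst; apply Hx; apply Vext; intro i; vs; rewrite pow0_odd; ring. }
    split.
    + intros u v Huv; apply Vext; intro i.
      apply (f_equal (fun w => proj1_sig w i)) in Huv; vs.
      apply Rmult_eq_reg_l in Huv; auto. apply pow_nonzero; auto.
    + intro y; exists (Vact (/ l) y); apply Vext; intro i; vs.
      rewrite <- Rmult_assoc, <- Rpow_mult_distr, Rinv_r, pow1 by auto; ring.
  - intros l1 l2 _ _; exists (l1 * l2); intro x; apply Vext; intro i; vs.
    rewrite Rpow_mult_distr; ring.
  - intros l [x Hx].
    assert (Hl : l <> 0).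
    { intro e; subst; apply Hx; apply Vext; intro i; vs; rewrite pow0_odd; ring. }
    exists (/ l); intro y; apply Vext; intro i; vs.
    rewrite <- Rmult_assoc, <- Rpow_mult_distr, Rinv_l, pow1 by auto; ring.
  - intros a b x H.
    destruct (classic (exists i, proj1_sig x i <> 0)) as [[i Hi]|Hn].
    + left. apply (f_equal (fun w => proj1_sig w i)) in H; vs.
      apply Rmult_eq_reg_r in H; auto. apply odd_inj in H. subst; auto.
    + right; apply Vext; intro i; vs.
      destruct (Req_dec (proj1_sig x i) 0); auto. exfalso; apply Hn; eauto.
Qed.

Lemma single_qker (v : Vcar) (k : nat) :
  (forall i, i <> k -> proj1_sig v i = 0) -> Qker Vstr v.
Proof.
  intros Hv a b. exists (oroot (a ^ (2 * k + 1) + b ^ (2 * k + 1)) k).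
  apply Vext; intro i; vs.
  destruct (Nat.eq_dec i k).
  - subst. rewrite oroot_spec; ring.
  - rewrite Hv by auto; ring.
Qed.

Lemma V_gen_aux (N : nat) : forall v : Vcar, (forall i, (N <= i)%nat -> proj1_sig v i = 0) ->
  gen Vstr (Qker Vstr) v.
Proof.
  induction N; intros v Hv.
  - replace v with Vzero. apply gen_zero.
    apply Vext; intro i; vs; rewrite Hv; auto; lia.
  - replace v with (Vadd (truncv v N) (unitv N (proj1_sig v N))).
    + apply (gen_add Vstr).
      * apply IHN; intros i Hi; vs. destruct (Nat.ltb_spec i N); auto; lia.
      * apply gen_in. apply (single_qker _ N). intros i Hi; vs.
        destruct (Nat.eqb_spec i N); auto; lia.
    + apply Vext; intro i; vs.
      destruct (Nat.ltb_spec i N), (Nat.eqb_spec i N); subst; try lia; try ring.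
      rewrite Hv by lia; ring.
Qed.

Lemma V_nvs : near_vs Vstr.
Proof.
  split. apply V_Fgroup.
  intros [v [N HN]]. apply (V_gen_aux N). simpl; auto.
Qed.

Section UP.
Variable U : (nat -> Prop) -> Prop.
Hypothesis HU : ultrafilter U.

Lemma U_mono (A B : nat -> Prop) : U A -> (forall n, A n -> B n) -> U B.
Proof. destruct HU as [_ [_ [H _]]]; eauto. Qed.
Lemma U_and (A B : nat -> Prop) : U A -> U B -> U (fun n => A n /\ B n).
Proof. destruct HU as [_ [_ [_ [H _]]]]; eauto. Qed.
Lemma U_all (A : nat -> Prop) : (forall n, A n) -> U A.
Proof. intro H; apply U_mono with (fun _ => True); auto. apply HU. Qed.
Lemma U_false (A : nat -> Prop) : U A -> (forall n, ~ A n) -> False.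
Proof. intros H1 H2. apply (proj1 (proj2 HU)). apply (U_mono _ _ H1). intros n h; exact (H2 n h). Qed.
Lemma U_dich (A : nat -> Prop) : U A \/ U (fun n => ~ A n).
Proof. apply HU. Qed.
Lemma U_and2 (A B C : nat -> Prop) : U A -> U B -> (forall n, A n -> B n -> C n) -> U C.
Proof. intros H1 H2 H. apply (U_mono _ _ (U_and _ _ H1 H2)). intros n [a b]; auto. Qed.

Variable M : LStruct.
Notation W := (ultrapower M U).

Lemma urep_spec (w : UPcar M U) : ucls M U w = ueq M U (urep M U w).
Proof. unfold urep. destruct (constructive_indefinite_description _ _) as [f Hf]. simpl; exact Hf. Qed.

Lemma ucls_inj (w1 w2 : UPcar M U) : ucls M U w1 = ucls M U w2 -> w1 = w2.
Proof. destruct w1, w2; simpl; intro; subst; f_equal; apply proof_irrelevance. Qed.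

Lemma ueq_ext (f g : nat -> M) : U (fun n => f n = g n) -> ueq M U f = ueq M U g.
Proof.
  intro H. apply functional_extensionality; intro h. apply propositional_extensionality.
  unfold ueq; split; intro H'.
  - apply (U_and2 _ _ _ H H'); intros n a b; congruence.
  - apply (U_and2 _ _ _ H H'); intros n a b; congruence.
Qed.

Lemma uclass_eq (f g : nat -> M) : uclass M U f = uclass M U g -> U (fun n => f n = g n).
Proof.
  intro H. apply (f_equal (ucls M U)) in H. simpl in H.
  change (ueq M U f g). rewrite H. apply U_all; auto.
Qed.

Lemma urep_uclass (f : nat -> M) : U (fun n => urep M U (uclass M U f) n = f n).
Proof.
  pose proof (urep_spec (uclass M U f)) as H. simpl in H.
  change (ueq M U (urep M U (uclass M U f)) f). rewrite <- H. apply U_all; auto.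
Qed.

Lemma uclass_urep (w : UPcar M U) : w = uclass M U (urep M U w).
Proof. apply ucls_inj. simpl. apply urep_spec. Qed.

Lemma UP_eq (w1 w2 : UPcar M U) :
  w1 = w2 <-> U (fun n => urep M U w1 n = urep M U w2 n).
Proof.
  split.
  - intros ->; apply U_all; auto.
  - intro H. apply ucls_inj. rewrite !urep_spec. apply ueq_ext; auto.
Qed.

Definition envn (e : nat -> UPcar M U) (n : nat) : nat -> M := fun k => urep M U (e k) n.

Lemma los_term (t : term) (e : nat -> W) :
  U (fun n => urep M U (teval W e t) n = teval M (envn e n) t).
Proof.
  induction t; simpl.
  - apply U_all; auto.
  - apply urep_uclass.
  - unfold UPadd. eapply U_and2; [apply (U_and _ _ IHt1 IHt2)| apply urep_uclass |].
    intros n [a b] c. simpl in c. rewrite c, a, b; auto.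
  - unfold UPact. eapply U_and2; [apply IHt| apply urep_uclass |].
    intros n a c. simpl in c. rewrite c, a; auto.
Qed.

Lemma envn_upd (e : nat -> W) (m : nat) (x : W) (n : nat) :
  envn (fun k => if Nat.eqb k m then x else e k) n =
  (fun k => if Nat.eqb k m then urep M U x n else envn e n k).
Proof. apply functional_extensionality; intro k; unfold envn; destruct (Nat.eqb k m); auto. Qed.

Lemma los (phi : formula) : forall e : nat -> W,
  holds W e phi <-> U (fun n => holds M (envn e n) phi).
Proof.
  induction phi; intro e; simpl.
  - pose proof (los_term t e) as H1. pose proof (los_term t0 e) as H2.
    rewrite UP_eq. split; intro H.
    + apply (U_and2 _ _ _ (U_and _ _ H1 H2) H). intros n [a b] c; congruence.
    + apply (U_and2 _ _ _ (U_and _ _ H1 H2) H). intros n [a b] c; congruence.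
  - rewrite IHphi. split; intro H.
    + destruct (U_dich (fun n => holds M (envn e n) phi)); tauto.
    + intro H'. apply (U_false _ (U_and _ _ H H')). intros n [a b]; auto.
  - rewrite IHphi1, IHphi2. split.
    + intros [a b]; apply U_and; auto.
    + intro H; split; apply (U_mono _ _ H); tauto.
  - rename n into m. split.
    + intro H.
      destruct (U_dich (fun n => forall x : M,
         holds M (fun k => if Nat.eqb k m then x else envn e n k) phi)) as [h|h]; auto.
      exfalso.
      pose (g := fun n => epsilon (inhabits (lzero : M))
                 (fun v => ~ holds M (fun k => if Nat.eqb k m then v else envn e n k) phi)).
      pose proof (proj1 (IHphi _) (H (uclass M U g))) as H3.
      apply (U_false _ (U_and _ _ (U_and _ _ h H3) (urep_uclass g))).
      intros n [[a b] c]. rewrite envn_upd, c in b.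
      apply not_all_ex_not in a.
      apply (epsilon_spec (inhabits (lzero : M)) _ a). exact b.
    + intros H x. apply IHphi. rewrite (functional_extensionality _ _ (envn_upd e m x)).
      apply (U_mono _ _ H). intros n h. apply h.
Qed.

Lemma los_models (phi : formula) : models M phi -> models W phi.
Proof. intros H e. apply los. apply U_all; intro n; apply H. Qed.

End UP.

Lemma pow_odd_uniq (c : R) (i k : nat) : c ^ (2 * i + 1) = 2 -> c ^ (2 * k + 1) = 2 -> i = k.
Proof.
  intros Hi Hk.
  assert (Ha : forall j, Rabs c ^ (2 * j + 1) = Rabs (c ^ (2 * j + 1))) by (intro; apply RPow_abs).
  assert (H1 : 1 < Rabs c).
  { destruct (Rle_lt_dec (Rabs c) 1); auto.
    assert (Rabs c ^ (2 * i + 1) <= 1 ^ (2 * i + 1)) by (apply pow_incr; split; auto; apply Rabs_pos).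
    rewrite pow1, Ha, Hi, Rabs_right in H; lra. }
  destruct (Nat.lt_total i k) as [h|[h|h]]; auto; exfalso.
  - assert (Rabs c ^ (2 * i + 1) < Rabs c ^ (2 * k + 1)) by (apply Rlt_pow; auto; lia).
    rewrite !Ha, Hi, Hk in H; lra.
  - assert (Rabs c ^ (2 * k + 1) < Rabs c ^ (2 * i + 1)) by (apply Rlt_pow; auto; lia).
    rewrite !Ha, Hi, Hk in H; lra.
Qed.

Section S.
Variable U : (nat -> Prop) -> Prop.
Hypothesis HU : ultrafilter U.
Hypothesis HN : nonprincipal U.
Notation W := (ultrapower Vstr U).

Lemma qker_single (w : W) : Qker W w ->
  exists k, U (fun n => forall i, i <> k -> proj1_sig (urep Vstr U w n) i = 0).
Proof.
  intro H. destruct (H 1 1) as [c Hc]. simpl in Hc. unfold UPadd, UPact in Hc.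
  apply (uclass_eq U HU) in Hc.
  pose proof (urep_uclass U HU Vstr (fun n => Vact 1 (urep Vstr U w n))) as H1.
  assert (H2 : U (fun n => forall i, 2 * proj1_sig (urep Vstr U w n) i
                  = c ^ (2 * i + 1) * proj1_sig (urep Vstr U w n) i)).
  { apply (U_and2 U HU _ _ _ Hc H1). intros n a b i. simpl in a, b. rewrite b in a.
    apply (f_equal (fun v => proj1_sig v i)) in a. vs. rewrite pow1 in a. lra. }
  destruct (classic (exists k, c ^ (2 * k + 1) = 2)) as [[k Hk]|Hn].
  - exists k. apply (U_mono U HU _ _ H2). intros n h i Hi.
    specialize (h i). assert (c ^ (2 * i + 1) <> 2) by (intro e; apply Hi; eapply pow_odd_uniq; eauto).
    assert ((2 - c ^ (2 * i + 1)) * proj1_sig (urep Vstr U w n) i = 0) by lra.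
    apply Rmult_integral in H3; destruct H3; auto. lra.
  - exists 0%nat. apply (U_mono U HU _ _ H2). intros n h i _.
    specialize (h i). assert (c ^ (2 * i + 1) <> 2) by (intro e; apply Hn; eauto).
    assert ((2 - c ^ (2 * i + 1)) * proj1_sig (urep Vstr U w n) i = 0) by lra.
    apply Rmult_integral in H3; destruct H3; auto. lra.
Qed.

Lemma finite_not_U (N : nat) : ~ U (fun n => (n < N)%nat).
Proof.
  induction N; intro H.
  - apply (U_false U HU _ H). intros; lia.
  - destruct (U_dich U HU (fun n => n = N)) as [h|h].
    + exact (HN N h).
    + apply IHN. apply (U_and2 U HU _ _ _ H h). intros; lia.
Qed.

Definition Pfin (w : W) : Prop :=
  exists N, U (fun n => forall i, (N <= i)%nat -> proj1_sig (urep Vstr U w n) i = 0).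

Lemma gen_Pfin (w : W) : gen W (Qker W) w -> Pfin w.
Proof.
  intro H; induction H.
  - destruct (qker_single u H) as [k Hk]. exists (S k).
    apply (U_mono U HU _ _ Hk). intros n h i Hi; apply h; lia.
  - exists 0%nat. simpl. unfold UPzero.
    apply (U_mono U HU _ _ (urep_uclass U HU Vstr (fun _ => @lzero Vstr))). intros n h i _. rewrite h. reflexivity.
  - destruct IHgen1 as [N1 H1], IHgen2 as [N2 H2]. exists (N1 + N2)%nat.
    simpl; unfold UPadd.
    apply (U_and2 U HU _ _ _ (U_and U HU _ _ H1 H2) (urep_uclass U HU Vstr (fun n => @ladd Vstr (urep Vstr U x n) (urep Vstr U y n)))).
    intros n [a b] c i Hi. rewrite c. vs. rewrite a, b by lia; ring.
  - destruct IHgen as [N1 H1]. exists N1.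
    simpl in H0; unfold UPadd, UPzero in H0. apply (uclass_eq U HU) in H0.
    apply (U_and2 U HU _ _ _ H1 H0).
    intros n a b i Hi. apply (f_equal (fun v => proj1_sig v i)) in b. vs.
    rewrite a in b by auto. lra.
Qed.

Definition wstar : W := uclass Vstr U (fun n => unitv n 1).

Lemma wstar_notgen : ~ gen W (Qker W) wstar.
Proof.
  intro H. destruct (gen_Pfin _ H) as [N HP]. unfold Pfin, wstar in *.
  apply (finite_not_U N).
  apply (U_and2 U HU _ _ _ HP (urep_uclass U HU Vstr (fun n => unitv n 1))).
  intros n a b. destruct (Nat.lt_ge_cases n N); auto.
  specialize (a n H0). rewrite b in a. vs. rewrite Nat.eqb_refl in a. lra.
Qed.

Lemma wstar_notQ : ~ Qker W wstar.
Proof.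
  intro H. destruct (qker_single _ H) as [k Hk]. unfold wstar in *.
  apply (HN k).
  apply (U_and2 U HU _ _ _ Hk (urep_uclass U HU Vstr (fun n => unitv n 1))).
  intros n a b. destruct (Nat.eq_dec n k); auto.
  specialize (a n n0). rewrite b in a. vs. rewrite Nat.eqb_refl in a. lra.
Qed.

Lemma wstar_prodQ : prodQ Vstr U wstar.
Proof.
  exists (fun n => unitv n 1). split; auto.
  apply (U_all U HU). intro n. apply (single_qker _ n). intros i Hi. vs.
  destruct (Nat.eqb_spec i n); auto; lia.
Qed.

Lemma Q_prodQ (w : W) : Qker W w -> prodQ Vstr U w.
Proof.
  intro H. destruct (qker_single _ H) as [k Hk].
  exists (urep Vstr U w). split. apply (uclass_urep U Vstr).
  apply (U_mono U HU _ _ Hk). intros n h. apply (single_qker _ k). auto.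
Qed.

End S.

From mathcomp Require Import all_boot classical_sets boolp filter.

Lemma exists_npu : exists U : (nat -> Prop) -> Prop, ultrafilter U /\ nonprincipal U.
Proof.
pose F : set_system nat := fun A => exists N, forall n, (N <= n)%nat -> A n.
have FF : ProperFilter F.
  apply: Build_ProperFilter_ex.
    by move=> P [N HN]; exists N; apply: HN.
  split.
  - by exists 0%nat.
  - move=> A B [N1 H1] [N2 H2]; exists (maxn N1 N2) => n Hn; split.
      by apply: H1; apply: leq_trans Hn; rewrite leq_maxl.
    by apply: H2; apply: leq_trans Hn; rewrite leq_maxr.
  - by move=> P Q PQ [N HN]; exists N => n /HN /PQ.
have [G [GU FG]] := ultraFilterLemma FF.
exists G; split; last first.
  move=> m Gm.
  have Gc : G (fun n => n <> m).
    by apply: FG; exists m.+1 => n Hn Em; move: Hn; rewrite Em ltnn.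
  have G0 : G (fun _ => False).
    by apply: filterS (filterI Gm Gc) => x [].
  exact: (filter_not_empty G G0).
split; first exact: filterT.
split; first exact: filter_not_empty.
split; first by move=> A B GA AB; apply: filterS GA.
split; first by move=> A B GA GB; apply: filterI.
by move=> A; apply: in_ultra_setVsetC.
Qed.

Theorem mainTheorem12 :
  near_vs Vstr /\
  (forall U : (nat -> Prop) -> Prop, ultrafilter U -> nonprincipal U ->
     ~ (forall w : ultrapower Vstr U, gen (ultrapower Vstr U) (Qker (ultrapower Vstr U)) w) /\
     (forall w : ultrapower Vstr U, Qker (ultrapower Vstr U) w -> prodQ Vstr U w) /\
     (exists w : ultrapower Vstr U, prodQ Vstr U w /\ ~ Qker (ultrapower Vstr U) w)) /\
  ~ elementary near_vs.
Proof.
  split; [exact V_nvs|]. split.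
  - intros U HU HN. split; [|split].
    + intro H. apply (wstar_notgen U HU HN). apply H.
    + intros w Hw. eapply Q_prodQ; eauto.
    + exists (wstar U). split; [eapply wstar_prodQ | eapply wstar_notQ]; eauto.
  - intros [T [_ HT]]. destruct exists_npu as [U [HU HN]].
    apply (wstar_notgen U HU HN).
    assert (Hw : near_vs (ultrapower Vstr U)).
    { apply (proj2 (HT _)). intros phi Tphi. apply (los_models U HU Vstr).
      exact (proj1 (HT Vstr) V_nvs phi Tphi). }
    apply (proj2 Hw).
Qed.
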